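(* Let $G$ be a group acting linearly and isometrically on a real Hilbert space $M$, let $t_0\in M\setminus\{0\}$ and let $\epsilon$ be a random variable with $\mathbb{E}(\epsilon)=0$ and $\mathbb{E}\|\epsilon\|<\infty$. Then $\mathrm{Fix}(M)$ is a closed linear subspace of $M$ and $$\frac{1}{\|t_0\|}\mathbb{E}\Big(\sup_{g\in G}\langle g\cdot\epsilon,t_0\rangle\Big)\le \mathrm{dist}\big(t_0/\|t_0\|,\mathrm{Fix}(M)\big)\,\mathbb{E}(\|\epsilon\|).$$
   Context: $M$ is a real Hilbert space with inner product $\langle\cdot,\cdot\rangle$ and norm $\|\cdot\|$; the action is linear and isometric ($\|g\cdot x\|=\|x\|$). $\mathrm{Fix}(M)=\{x\in M: g\cdot x=x \text{ for all } g\in G\}$ is the set of fixed points, and $\mathrm{dist}(x,A)=\inf_{a\in A}\|x-a\|$. *)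

(* Defs.v *)
From HB Require Import structures.
From mathcomp Require Import all_boot all_order all_algebra.
From mathcomp Require Import all_classical all_reals all_analysis measurable_realfun.
Set Implicit Arguments. Unset Strict Implicit. Unset Printing Implicit Defensive.
Import Order.TTheory GRing.Theory Num.Theory.
Import numFieldNormedType.Exports.
Local Open Scope classical_set_scope.
Local Open Scope ring_scope.

Definition is_group (G : Type) (mul : G -> G -> G) (one : G) (inv : G -> G) :=
  [/\ forall a b c, mul a (mul b c) = mul (mul a b) c,
      forall a, mul one a = a,
      forall a, mul a one = a,
      forall a, mul (inv a) a = one &
      forall a, mul a (inv a) = one].

Definition is_inner_product (R : realType) (M : normedModType R)
    (ip : M -> M -> R) :=
  [/\ forall x y, ip x y = ip y x,
      forall a x y z, ip (a *: x + y) z = a * ip x z + ip y z &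
      forall x, ip x x = `|x| ^+ 2].

Definition is_lin_isom_action (R : realType) (M : normedModType R)
    (G : Type) (mul : G -> G -> G) (one : G) (act : G -> M -> M) :=
  [/\ forall x, act one x = x,
      forall g h x, act (mul g h) x = act g (act h x),
      forall g a x y, act g (a *: x + y) = a *: act g x + act g y &
      forall g x, `|act g x| = `|x|].

Definition Fix (R : realType) (M : normedModType R) (G : Type)
    (act : G -> M -> M) : set M := [set x | forall g, act g x = x].

Definition closed_linear_subspace (R : realType) (M : normedModType R)
    (S : set M) :=
  [/\ closed S, S 0, forall x y, S x -> S y -> S (x + y) &
      forall (a : R) x, S x -> S (a *: x)].

Definition dist (R : realType) (M : normedModType R) (x : M) (A : set M) : R :=
  inf [set `|x - a| | a in A].

(* Mean zero of an M-valued random variable eps, expressed weakly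
   (no Bochner integral in the library): for every v in M, the real random
   variable <eps, v> is integrable and has expectation 0. *)
Definition mean_zero (R : realType) (d : measure_display) (Omega : measurableType d)
    (P : probability Omega R) (M : normedModType R) (ip : M -> M -> R)
    (eps : Omega -> M) :=
  forall v : M, P.-integrable setT (fun w => (ip (eps w) v)%:E) /\
    (\int[P]_w (ip (eps w) v)%:E = 0)%E.

(* Main.v *)
Require Import Defs.
From HB Require Import structures.
From mathcomp Require Import all_boot all_order all_algebra.
From mathcomp Require Import all_classical all_reals all_analysis measurable_realfun.
From mathcomp Require Import ring lra.
Import Order.TTheory GRing.Theory Num.Theory.
Import numFieldNormedType.Exports.
Local Open Scope classical_set_scope.
Local Open Scope ring_scope.
Section Alg.
Variables (R : realType) (M : normedModType R) (ip : M -> M -> R).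
Hypothesis Hip : is_inner_product ip.

Lemma ip0l z : ip 0 z = 0.
Proof.
case: Hip => _ ipL _; have := ipL 1 0 0 z.
rewrite scale1r addr0 mul1r => h; lra.
Qed.

Lemma ipDr x y z : ip x (y + z) = ip x y + ip x z.
Proof.
case: Hip => ipC ipL _; have := ipL 1 y z x; rewrite scale1r mul1r => h.
by rewrite (ipC x) h (ipC x) (ipC x).
Qed.

Lemma ipNl x z : ip (- x) z = - ip x z.
Proof.
case: Hip => _ ipL _; have := ipL (-1) x 0 z.
by rewrite addr0 ip0l addr0 scaleN1r mulN1r.
Qed.

Lemma ip_polar x y : ip x y = (`|x + y| ^+ 2 - `|x| ^+ 2 - `|y| ^+ 2) / 2.
Proof.
case: Hip => ipC ipL ipn.
have h := ipL 1 x y (x + y); rewrite scale1r mul1r in h.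
rewrite -!ipn h !ipDr (ipC y x).
by field.
Qed.

Lemma ip_le x y : ip x y <= `|x| * `|y|.
Proof.
rewrite ip_polar.
have h1 := ler_normD x y; have h2 := normr_ge0 (x + y).
have h3 := normr_ge0 x; have h4 := normr_ge0 y.
nra.
Qed.

Lemma ip_ge x y : - (`|x| * `|y|) <= ip x y.
Proof.
have := ip_le (- x) y; rewrite ipNl normrN; lra.
Qed.
End Alg.
Arguments ip0l {R M ip} Hip z.
Arguments ipDr {R M ip} Hip x y z.
Arguments ipNl {R M ip} Hip x z.
Arguments ip_polar {R M ip} Hip x y.
Arguments ip_le {R M ip} Hip x y.
Arguments ip_ge {R M ip} Hip x y.
Section Act.
Variables (R : realType) (M : normedModType R) (G : Type) (mul : G -> G -> G)
  (one : G) (act : G -> M -> M).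
Hypothesis Ha : is_lin_isom_action mul one act.

Lemma actD g x y : act g (x + y) = act g x + act g y.
Proof. by case: Ha => _ _ aL _; have := aL g 1 x y; rewrite !scale1r. Qed.

Lemma act0 g : act g 0 = 0.
Proof.
have h := actD g 0 0; rewrite addr0 in h.
by apply/(addrI (act g 0)); rewrite addr0 -h.
Qed.

Lemma actZ g a x : act g (a *: x) = a *: act g x.
Proof. by case: Ha => _ _ aL _; have := aL g a x 0; rewrite !addr0 act0 addr0. Qed.

Lemma actB g x y : act g (x - y) = act g x - act g y.
Proof. by rewrite actD -scaleN1r actZ scaleN1r. Qed.

Lemma actN g x : `|act g x| = `|x|.
Proof. by case: Ha. Qed.

Lemma lip_cont (V : normedModType R) (f : M -> V) :
  (forall x y, `|f x - f y| <= 2 * `|x - y|) -> continuous f.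
Proof.
move=> H x; apply/cvgrPdist_lt => e e0.
have e20 : 0 < e / 2 by rewrite divr_gt0.
have h := (cvgrPdist_lt _ _).1 (@cvg_id _ (nbhs x)) _ e20.
near=> y.
apply: (le_lt_trans (H _ _)).
have : `|x - y| < e / 2 by near: y; exact: h.
lra.
Unshelve. all: by end_near.
Qed.

Lemma Fix_closed : closed_linear_subspace (Fix act).
Proof.
split.
- have -> : Fix act = \bigcap_(g in setT) ((fun x => `|act g x - x|) @^-1` [set r | r = 0]).
    apply/seteqP; split => x /=.
      by move=> h g _ /=; rewrite h subrr normr0.
    by move=> h g; have /= /eqP := h g I; rewrite normr_eq0 subr_eq0 => /eqP.
  apply: closed_bigI => g _; apply: preimage_closed; last exact: closed_eq.
  move=> x _; apply: lip_cont => {}x y.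
  apply: (le_trans (ler_dist_dist _ _)).
  have -> : act g x - x - (act g y - y) = act g (x - y) - (x - y) by rewrite actB !opprD !opprK !addrA; congr (_ + _); exact: addrAC.
  apply: (le_trans (ler_normB _ _)); rewrite actN; lra.
- by move=> g; rewrite act0.
- by move=> x y hx hy g; rewrite actD hx hy.
- by move=> a x hx g; rewrite actZ hx.
Qed.
End Act.
Arguments actD {R M G mul one act} Ha g x y.
Arguments act0 {R M G mul one act} Ha g.
Arguments actZ {R M G mul one act} Ha g a x.
Arguments actB {R M G mul one act} Ha g x y.
Arguments actN {R M G mul one act} Ha g x.
Arguments Fix_closed {R M G mul one act} Ha.

Theorem mainTheorem14
  (R : realType) (M : completeNormedModType R) (ip : M -> M -> R)
  (G : Type) (mul : G -> G -> G) (one : G) (inv : G -> G) (act : G -> M -> M)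
  (d : measure_display) (Omega : measurableType d) (P : probability Omega R)
  (eps : Omega -> M) (t0 : M) :
  is_inner_product ip ->
  is_group mul one inv ->
  is_lin_isom_action mul one act ->
  t0 != 0 ->
  mean_zero P ip eps ->
  P.-integrable setT (fun w => (`|eps w|)%:E) ->
  measurable_fun setT
    (fun w => (ereal_sup [set (ip (act g (eps w)) t0)%:E | g in [set: G]] : \bar R)) ->
  closed_linear_subspace (Fix act) /\
  ((`|t0|)^-1%:E *
     \int[P]_w ereal_sup [set (ip (act g (eps w)) t0)%:E | g in [set: G]]
   <= (dist (`|t0|^-1 *: t0) (Fix act))%:E * \int[P]_w (`|eps w|)%:E)%E.
Proof.
move=> Hip Hg Ha t0n mz ieps mS.
split; first exact: Fix_closed Ha.
set S := fun w => ereal_sup _.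
have ipr0 : forall x, ip x 0 = 0.
  by move=> x; have [ipC _ _] := Hip; rewrite ipC (ip0l Hip).
have Fix0 : Fix act 0 by move=> g; rewrite (act0 Ha).
have Sub : forall b w, Fix act b ->
    (S w <= (`|eps w| * `|t0 - b| + ip (eps w) b)%:E)%E.
  move=> b w hb; apply: ge_ereal_sup => _ [g _ <-]; rewrite lee_fin.
  have -> : ip (act g (eps w)) t0
      = ip (act g (eps w)) (t0 - b) + ip (act g (eps w)) b.
    by rewrite -(ipDr Hip) subrK.
  have -> : ip (act g (eps w)) b = ip (eps w) b.
    by rewrite -{1}(hb g) (ip_polar Hip) [in RHS](ip_polar Hip) -(actD Ha) !(actN Ha).
  apply: lerD => //; apply: le_trans (ip_le Hip _ _) _; rewrite (actN Ha).
  by [].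
have Slb : forall w, ((ip (eps w) t0)%:E <= S w)%E.
  move=> w; apply: ereal_sup_ubound; exists one => //.
  by case: Ha => a1 _ _ _; rewrite a1.
have Sfin : forall w, S w = (fine (S w))%:E /\ `|fine (S w)| <= `|eps w| * `|t0|.
  move=> w; have := Sub 0 w Fix0; have := Slb w.
  rewrite subr0 ipr0 addr0.
  case: (S w) => [r| |] h1 h2 /=.
  - split => //; rewrite !lee_fin in h1 h2; rewrite ler_norml.
    have := ip_ge Hip (eps w) t0; move=> h3; apply/andP; split; lra.
  - by move: h2; rewrite leye_eq.
  - by move: h1; rewrite leeNy_eq.
have iS : P.-integrable setT S.
  apply: (le_integrable measurableT mS (g := fun w => (`|t0|)%:E * (`|eps w|)%:E)%E).
  - move=> w _; rewrite -/(S w) (Sfin w).1 /= lee_fin normrM !normr_id mulrC.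
    exact: (Sfin w).2.
  - exact: integrableZl.
have key : forall b, Fix act b ->
    (\int[P]_w S w <= (`|t0 - b|)%:E * \int[P]_w (`|eps w|)%:E)%E.
  move=> b hb.
  have ih1 : P.-integrable setT (fun w => (`|t0 - b|)%:E * (`|eps w|)%:E)%E.
    exact: integrableZl.
  have ih : P.-integrable setT
      (fun w => (`|t0 - b|)%:E * (`|eps w|)%:E + (ip (eps w) b)%:E)%E.
    exact: (integrableD measurableT ih1 (mz b).1).
  apply: le_trans (le_integral measurableT iS ih _) _.
    move=> w _; rewrite -EFinM -EFinD mulrC; exact: Sub.
  rewrite integralD //; last exact: (mz b).1.
  by rewrite integralZl // (mz b).2 adde0.
have ifin := integrable_fin_num measurableT ieps.
have jfin := integrable_fin_num measurableT iS.
rewrite -(fineK ifin) -(fineK jfin).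
move: (key) (fineK ifin) (fineK jfin).
set i := fine _; set j := fine _ => key' Ii Jj.
have i0 : 0 <= i.
  by rewrite -lee_fin Ii; apply: integral_ge0 => w _; rewrite lee_fin.
rewrite -!EFinM lee_fin.
set u := `|t0|^-1 *: t0.
have t0p : 0 < `|t0| by rewrite normr_gt0.
have key2 : forall a, Fix act a -> `|t0|^-1 * j <= `|u - a| * i.
  move=> a ha.
  have hb : Fix act (`|t0| *: a) by move=> g; rewrite (actZ Ha) ha.
  have := key' _ hb; rewrite -Ii -Jj -EFinM lee_fin.
  have -> : t0 - `|t0| *: a = `|t0| *: (u - a).
    by rewrite scalerBr /u scalerA mulfV ?gt_eqF // scale1r.
  rewrite normrZ normr_id => h.
  rewrite -(ler_pM2l t0p) mulrA mulfV ?gt_eqF // mul1r mulrA.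
  exact: h.
case: (eqVneq i 0) => [i_0|ineq].
  have := key2 0 Fix0; rewrite i_0 !mulr0 => h; exact: h.
have ipos : 0 < i by rewrite lt_def ineq i0.
rewrite -ler_pdivrMr //.
apply: lb_le_inf.
  by exists `|u - 0|, 0.
move=> _ [a ha <-]; rewrite ler_pdivrMr //; exact: key2.
Qed.
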